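(* Let $\lambda$ be a partition with at most $n$ parts, let $\bar\lambda\in\mathbb{N}^n$ be obtained from $\lambda$ by replacing every part equal to $1$ by $0$, let $\nu\in S_n(\bar\lambda)$ be a rearrangement of $\bar\lambda$, and let $S\subseteq\{1,\dots,n\}$ with $\#S=\ell(\lambda)$ (the number of nonzero parts of $\lambda$). Then $$\sum_{\substack{\mu\in S_n(\lambda)\\ \mathrm{Supp}(\mu)=S}}a^\nu_\mu\big|_{q=1}=1.$$
   Context: $S_n(\lambda)$ is the set of rearrangements of $\lambda$, and $\mathrm{Supp}(\mu)=\{i:\mu_i>0\}$. Generalized two-line queues and $a^\nu_\mu\in\mathbb{Q}(q,t)$. For $\nu,\mu\in\mathbb{N}^n$ (top row $\nu$, bottom row $\mu$), require: $\nu$ has no part equal to $1$; $\#\{i:\mu_i=j\}=\#\{i:\nu_i=j\}$ for every $j>1$; and for each $i$, $\mu_i=0$ or $\nu_i\le\mu_i$. Place a ball labeled $\nu_i$ in column $i$ of the top row when $\nu_i>0$, and a ball labeled $\mu_i$ in column $i$ of the bottom row when $\mu_i>0$. A generalized two-line queue in $\mathcal{Q}^\nu_\mu$ is a bijection pairing each top ball with a bottom ball of the same label, such that whenever a top ball of label $a$ lies directly above a bottom ball of label $a$ they are paired to each other (trivial pairing); each pairing is drawn as the shortest strand going straight down or left to right, wrapping around cyclically (columns mod $n$). Weights: process top balls in decreasing order of label, ties broken right to left. For a nontrivial pairing $p$ joining a top ball of label $a$ in column $j$ to a bottom ball in column $j'$, the free balls for $p$ are the bottom-row balls not matched before $p$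 (excluding bottom balls of label $a$ that are trivially paired); $\mathrm{free}(p)$ is their number, and $\mathrm{skipped}(p)$ is the number of free balls in columns $j+1,\dots,j'-1$ (mod $n$). Set $\mathrm{wt}(p)=\frac{(1-t)t^{\mathrm{skipped}(p)}}{1-q^{a-1}t^{\mathrm{free}(p)}}q^{a-1}$ if $j'<j$ and $\frac{(1-t)t^{\mathrm{skipped}(p)}}{1-q^{a-1}t^{\mathrm{free}(p)}}$ if $j'>j$. Then $a^\nu_\mu=\sum_{Q\in\mathcal{Q}^\nu_\mu}\prod_{p\text{ nontrivial}}\mathrm{wt}(p)$ (zero if $\mathcal{Q}^\nu_\mu$ is empty), and $a^\nu_\mu|_{q=1}$ is its specialization at $q=1$. *)

(* Defs.v *)
From HB Require Import structures.
From mathcomp Require Import all_boot all_order all_algebra.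
Set Implicit Arguments. Unset Strict Implicit. Unset Printing Implicit Defensive.
Import GRing.Theory.
Local Open Scope ring_scope.

(* Columns are 'I_n (0-based); compositions are seq nat of size n, the
   entry in column i being nth 0 s i. *)

Section TwoLineQueues.
Variables (n : nat) (nu mu : seq nat).

Definition nuv (i : 'I_n) : nat := nth 0%N nu i.
Definition muv (i : 'I_n) : nat := nth 0%N mu i.

Definition tlq_require : bool :=
  [&& size nu == n, size mu == n,
      all (fun x => x != 1%N) nu,
      perm_eq [seq x <- mu | (1 < x)%N] [seq x <- nu | (1 < x)%N] &
      [forall i : 'I_n, (muv i == 0%N) || (nuv i <= muv i)%N]].

(* A queue is encoded by f : column of top ball |-> column of its bottom
   partner; on columns without top ball f is fixed to be the identity. *)
Definition tlq_valid (f : {ffun 'I_n -> 'I_n}) : bool :=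
  [&& [forall i, (nuv i == 0%N) ==> (f i == i)],
      [forall i, (0 < nuv i)%N ==> (muv (f i) == nuv i)],
      [forall i, forall i',
         [&& (0 < nuv i)%N, (0 < nuv i')%N & f i == f i'] ==> (i == i')],
      [forall k, (1 < muv k)%N ==> [exists i, (0 < nuv i)%N && (f i == k)]] &
      [forall i, ((0 < nuv i)%N && (muv i == nuv i)) ==> (f i == i)]].

Definition queues : {set {ffun 'I_n -> 'I_n}} := [set f | tlq_valid f].

Definition processed_before (i j : 'I_n) : bool :=
  (nuv j < nuv i)%N || ((nuv i == nuv j) && (j < i)%N).

Definition matched_before (f : {ffun 'I_n -> 'I_n}) (j k : 'I_n) : bool :=
  [exists i, [&& (0 < nuv i)%N, processed_before i j & f i == k]].

Definition is_free (f : {ffun 'I_n -> 'I_n}) (j k : 'I_n) : bool :=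
  [&& (0 < muv k)%N, ~~ matched_before f j k &
      ~~ ((nuv k == nuv j) && (muv k == nuv j))].

Definition cyc_between (j j' k : 'I_n) : bool :=
  if (j < j')%N then (j < k < j')%N else ((j < k)%N || (k < j')%N).

Definition free_count f j : nat := #|[set k | is_free f j k]|.
Definition skipped f j : nat := #|[set k | is_free f j k && cyc_between j (f j) k]|.

Variable F : fieldType.

Definition wt (q t : F) (f : {ffun 'I_n -> 'I_n}) (j : 'I_n) : F :=
  (1 - t) * t ^+ skipped f j / (1 - q ^+ (nuv j).-1 * t ^+ free_count f j)
  * (if (f j < j)%N then q ^+ (nuv j).-1 else 1).

(* a^nu_mu evaluated at (q, t); zero when the requirements fail or the set
   of queues is empty *)
Definition acoef (q t : F) : F :=
  if tlq_require then
    \sum_(f in queues) \prod_(j | (0 < nuv j)%N && (f j != j)) wt q t f j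
  else 0.

End TwoLineQueues.

Definition Qt := {fraction {poly rat}}.
Definition tQ : Qt := tofrac ('X : {poly rat}).

Definition acoef_q1 (n : nat) (nu mu : seq nat) : Qt :=
  @acoef n nu mu Qt 1 tQ.

Definition lambar (lam : seq nat) : seq nat :=
  [seq (if x == 1%N then 0%N else x) | x <- lam].

Definition supp (n : nat) (mu : seq nat) : {set 'I_n} :=
  [set i : 'I_n | (0 < nth 0%N mu i)%N].

(* Main.v *)
Require Import Defs.
From mathcomp Require Import all_boot all_order all_algebra.
From mathcomp Require Import zify.
Set Implicit Arguments. Unset Strict Implicit. Unset Printing Implicit Defensive.
Import GRing.Theory.
Local Open Scope ring_scope.


Definition upd n (f : {ffun 'I_n -> 'I_n}) (j k : 'I_n) : {ffun 'I_n -> 'I_n} :=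
  [ffun i => if i == j then k else f i].

Lemma updE n (f : {ffun 'I_n -> 'I_n}) j k i : upd f j k i = if i == j then k else f i.
Proof. by rewrite ffunE. Qed.

Lemma split_ffun (R : comNzRingType) n (x : 'I_n) (F : {ffun 'I_n -> 'I_n} -> R) :
  \sum_f F f = \sum_(g : {ffun 'I_n -> 'I_n} | g x == x) \sum_k F (upd g x k).
Proof.
rewrite (exchange_big_dep predT) //=.
rewrite (partition_big (fun f : {ffun 'I_n -> 'I_n} => f x) predT) //=.
apply: eq_bigr => k _.
rewrite (reindex_onto (fun g => upd g x k) (fun f => upd f x x)) /=.
  apply: eq_bigl => g; rewrite updE eqxx eqxx /= andbT.
  apply/eqP/eqP => [<-|gx]; first by rewrite updE eqxx.
  by apply/ffunP => i; rewrite !updE; case: eqP => // ->.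
move=> f /eqP fx; apply/ffunP => i; rewrite !updE; case: eqP => // ->.
by rewrite fx.
Qed.

Lemma iter_sum (R : comNzRingType) n (before : rel 'I_n)
  (C : 'I_n -> {ffun 'I_n -> 'I_n} -> bool) (W : 'I_n -> {ffun 'I_n -> 'I_n} -> R)
  (js : seq 'I_n) :
  uniq js ->
  {in js &, forall x y, before x y -> (index x js < index y js)%N} ->
  (forall j (f f' : {ffun 'I_n -> 'I_n}), j \in js -> (forall i, i \in js -> before i j -> f i = f' i) ->
     f j = f' j -> C j f = C j f' /\ W j f = W j f') ->
  (forall j (f : {ffun 'I_n -> 'I_n}), j \in js -> (forall i, i \in js -> before i j -> C i f) ->
     \sum_(k | C j (upd f j k)) W j (upd f j k) = 1) ->
  \sum_(f : {ffun 'I_n -> 'I_n} | [forall i, (i \notin js) ==> (f i == i)] && all (fun j => C j f) js)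
     \prod_(j <- js) W j f = 1.
Proof.
elim/last_ind: js => [|s x IH] Hu Hidx Hdep Hsum.
  rewrite (eq_bigl (pred1 [ffun i => i])); first by rewrite big_pred1_eq big_nil.
  move=> f /=; apply/andP/eqP => [[/forallP H _]|->].
    apply/ffunP => i; rewrite ffunE; apply/eqP; exact: (H i).
  by split=> //; apply/forallP => i; rewrite ffunE.
have xs : x \notin s by move: Hu; rewrite rcons_uniq => /andP[].
have us : uniq s by move: Hu; rewrite rcons_uniq => /andP[].
have nbx : forall i, i \in s -> ~~ before x i.
  move=> i iS; apply/negP => bxi.
  have := Hidx x i; rewrite !mem_rcons !inE eqxx iS orbT => /(_ isT isT bxi).
  rewrite -cats1 !index_cat (negPf xs) iS /= eqxx addn0.
  by move=> H; have := index_mem i s; rewrite iS => /(ltn_trans H); rewrite ltnn.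
have IH' := IH us.
have agree : forall g k j, j \in s -> C j (upd g x k) = C j g /\ W j (upd g x k) = W j g.
  move=> g k j js; apply: Hdep; rewrite ?mem_rcons ?inE ?js ?orbT //.
    move=> i iS bij; rewrite updE; case: eqP => // ix.
    by move: bij; rewrite ix (negPf (nbx _ js)).
  by rewrite updE; case: eqP => // jx; move: xs; rewrite -jx js.
rewrite big_mkcond (split_ffun x) /=.
have P1 : {in s &, forall x y : 'I_n, before x y -> (index x s < index y s)%N}.
  move=> a b aS bS; have := Hidx a b; rewrite !mem_rcons !inE aS bS !orbT => /(_ isT isT).
  by rewrite -cats1 !index_cat aS bS.
have P2 : forall j (f f' : {ffun 'I_n -> 'I_n}), j \in s ->
   (forall i, i \in s -> before i j -> f i = f' i) -> f j = f' j -> C j f = C j f' /\ W j f = W j f'.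
  move=> j f f' jS H; apply: Hdep; first by rewrite mem_rcons inE jS orbT.
  move=> i; rewrite mem_rcons inE => /orP[/eqP ->|iS]; last exact: H.
  by rewrite (negPf (nbx _ jS)).
have P3 : forall j (f : {ffun 'I_n -> 'I_n}), j \in s ->
   (forall i, i \in s -> before i j -> C i f) -> \sum_(k | C j (upd f j k)) W j (upd f j k) = 1.
  move=> j f jS H; apply: Hsum; first by rewrite mem_rcons inE jS orbT.
  move=> i; rewrite mem_rcons inE => /orP[/eqP ->|iS]; last exact: H.
  by rewrite (negPf (nbx _ jS)).
rewrite -[RHS](IH' P1 P2 P3).
rewrite [RHS]big_mkcond /= [RHS](bigID (fun g : {ffun 'I_n -> 'I_n} => g x == x)) /=.
rewrite [X in _ = _ + X]big1 ?addr0; last first.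
  move=> g gx; case: ifP => // /andP[/forallP /(_ x)]; rewrite xs /=.
  by rewrite (negPf gx).
apply: eq_bigr => g /eqP gx.
have idE : forall k, [forall i, (i \notin rcons s x) ==> (upd g x k i == i)] =
                   [forall i, (i \notin s) ==> (g i == i)].
  move=> k; apply/forallP/forallP => H i; move: (H i); rewrite ?mem_rcons inE updE.
    by case: (eqVneq i x) => [->|_]; rewrite ?gx ?eqxx ?implybT.
  by case: (eqVneq i x) => [->|_]; rewrite ?gx ?eqxx ?implybT.
have allE : forall k, all (fun j => C j (upd g x k)) (rcons s x) =
                      all (fun j => C j g) s && C x (upd g x k).
  move=> k; rewrite all_rcons andbC; congr (_ && _).
  by apply: eq_in_all => j jS; case: (agree g k j jS).
under eq_bigr => k _ do rewrite idE allE andbA big_rcons /=.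
case: ifP => HQ; last by rewrite big1 // => k _; rewrite HQ.
rewrite -[RHS]mulr1 -[X in _ = _ * X](Hsum x g); last first.
- move=> i; rewrite mem_rcons inE => /orP[/eqP ->|iS].
    by move=> bxx; have := Hidx x x; rewrite mem_rcons inE eqxx => /(_ isT isT bxx); rewrite ltnn.
  by move=> _; move/andP: HQ => [_ /allP]; apply.
- by rewrite mem_rcons inE eqxx.
rewrite big_distrr /= [RHS]big_mkcond /=; apply: eq_bigr => k _.
case: ifP => // HC; congr (_ * _).
by apply: eq_big_seq => j jS; case: (agree g k j jS).
Qed.



Lemma rank_sum (R : comNzRingType) n (d : 'I_n -> nat) (g : nat -> R) (A : {set 'I_n}) :
  {in A &, injective d} ->
  \sum_(k in A) g #|[set k' in A | (d k' < d k)%N]| = \sum_(0 <= s < #|A|) g s.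
Proof.
move cA: #|A| => m; elim: m A cA => [|m IH] A cA dinj.
  by rewrite big_geq // big_pred0 // => k; rewrite (cards0_eq cA) inE.
have [k0 k0A] : exists k0, k0 \in A.
  by apply/set0Pn; apply/negP => /eqP A0; rewrite A0 cards0 in cA.
case: (arg_maxnP d k0A) => x xA xmax; have {}xA : x \in A := xA.
have cAx : #|A :\ x| = m by move: cA; rewrite (cardsD1 x) xA add1n => -[].
have dinj' : {in A :\ x &, injective d}.
  by move=> a b /setD1P[_ aA] /setD1P[_ bA]; apply: dinj.
rewrite big_nat_recr //= -(IH _ cAx dinj') (bigD1 x) //= addrC; congr (_ + _).
  apply: eq_big => [k|k /andP[kA kx]]; first by rewrite !inE andbC.
  congr (g _); apply: eq_card => k'.
  rewrite !inE; case: (eqVneq k' x) => [->|//].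
  by rewrite xA /=; apply/negbTE; rewrite -leqNgt; apply: xmax.
rewrite -cAx; congr (g _); apply: eq_card => k'; rewrite !inE.
case: (eqVneq k' x) => [->|k'x] /=; first by rewrite ltnn andbF.
apply/andP/idP => [[]//|k'A]; split=> //.
have le : (d k' <= d x)%N := xmax k' k'A.
rewrite ltn_neqAle le andbT; apply/eqP => H; move: (dinj _ _ k'A xA H) => /eqP.
by rewrite (negPf k'x).
Qed.




Lemma tQX_neq1 m : (0 < m)%N -> 1 - tQ ^+ m != 0.
Proof.
move=> m0; rewrite subr_eq0 eq_sym /tQ -rmorphXn -(rmorph1 (@tofrac _)) tofrac_eq.
apply/negP => /eqP H; move: (congr1 (fun p : {poly rat} => size p) H); rewrite size_polyXn size_poly1; case: m m0 H => //.
Qed.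

Definition cdist n (j k : 'I_n) : nat := if (j < k)%N then (k - j - 1)%N else (k + n - j - 1)%N.

Lemma cyc_cdist n (j k k' : 'I_n) : k != j -> k' != j ->
  cyc_between j k k' = (cdist j k' < cdist j k)%N.
Proof.
rewrite /cyc_between /cdist -!val_eqE /= => kj k'j.
have := ltn_ord k; have := ltn_ord k'; have := ltn_ord j.
move: kj k'j; case: k k' j => [k ?] [k' ?] [j ?] /=.
case: (ltnP j k) => h1; case: (ltnP j k') => h2 => *; apply/idP/idP; lia.
Qed.

Lemma cdist_inj n (j : 'I_n) : {in [pred k | k != j] &, injective (cdist j)}.
Proof.
move=> a b; rewrite !inE /cdist -!val_eqE => aj bj; have := ltn_ord a; have := ltn_ord b.
move=> ha hb h; apply/val_inj; move: aj bj h ha hb.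
case: a b j => [a ?] [b ?] [j ?] /=.
case: (ltnP j a) => h1; case: (ltnP j b) => h2 => *; lia.
Qed.

Lemma geom n (A : {set 'I_n}) (j : 'I_n) : j \notin A -> A != set0 ->
  \sum_(k in A) ((1 - tQ) * tQ ^+ #|[set k' | (k' \in A) && cyc_between j k k']| / (1 - tQ ^+ #|A|)) = 1.
Proof.
move=> jA A0.
have cA : (0 < #|A|)%N by rewrite card_gt0.
have dinj : {in A &, injective (cdist j)}.
  move=> a b aA bA; apply: cdist_inj; rewrite inE; apply/eqP => ?; subst; by rewrite ?aA ?bA in jA.
have neqj : forall k, k \in A -> k != j by move=> k kA; apply/eqP => ?; subst; rewrite kA in jA.
transitivity (\sum_(k in A) ((fun s => (1 - tQ) * tQ ^+ s / (1 - tQ ^+ #|A|))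
     #|[set k' in A | (cdist j k' < cdist j k)%N]|)).
  apply: eq_bigr => k kA /=; congr ((1 - tQ) * tQ ^+ _ / _); apply: eq_card => k'.
  rewrite !inE; case k'A: (k' \in A) => //=; rewrite cyc_cdist //; exact: neqj.
rewrite (rank_sum (fun s => (1 - tQ) * tQ ^+ s / (1 - tQ ^+ #|A|)) dinj) -big_distrl -big_distrr /= big_mkord.
have E : (1 - tQ) * (\sum_(i < #|A|) tQ ^+ i) = 1 - tQ ^+ #|A|.
  by rewrite -opprB mulNr -subrX1 opprB.
by rewrite E divff // tQX_neq1.
Qed.



Lemma count_card n (Q : pred 'I_n) : count Q (enum 'I_n) = #|[set k | Q k]|.
Proof. by rewrite -sum1_count cardsE -sum1_card big_enum_cond. Qed.

Section Main.
Variables (n : nat) (nu : seq nat) (S : {set 'I_n}).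
Local Notation nv := (@nuv n nu).
Local Notation pb := (@processed_before n nu).
Local Notation mb := (@matched_before n nu).
Local Notation ff := {ffun 'I_n -> 'I_n}.

Definition inU (f : ff) j k := (k \in S) && ~~ mb f j k.
Definition Cc j (f : ff) := if inU f j j then f j == j else inU f j (f j) && (nv (f j) != nv j).
Definition Afree (f : ff) j k := inU f j k && (nv k != nv j).
Definition Wc j (f : ff) : Qt := if f j == j then 1 else
  (1 - tQ) * tQ ^+ #|[set k | Afree f j k && cyc_between j (f j) k]| /
  (1 - tQ ^+ #|[set k | Afree f j k]|).

Lemma pb_irr i : ~~ pb i i.
Proof. by rewrite /processed_before ltnn eqxx ltnn. Qed.

Lemma pb_trans i j k : pb i j -> pb j k -> pb i k.
Proof.
rewrite /processed_before; lia.
Qed.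

Lemma pb_asym i j : pb i j -> ~~ pb j i.
Proof. by move=> h; apply/negP => h'; have := pb_trans h h'; rewrite (negPf (pb_irr i)). Qed.

Lemma pb_total i j : i != j -> pb i j || pb j i.
Proof.
move=> ij; have h : (nat_of_ord i != nat_of_ord j) by exact: ij.
rewrite /processed_before; lia.
Qed.

Lemma pb_le i j : pb i j -> (nv j <= nv i)%N.
Proof. rewrite /processed_before; lia. Qed.

Lemma pb_gt i j : (nv j < nv i)%N -> pb i j.
Proof. by rewrite /processed_before => ->. Qed.

Lemma mbP (f : ff) j k :
  reflect (exists i, [/\ (0 < nv i)%N, pb i j & f i = k]) (mb f j k).
Proof.
apply: (iffP existsP) => [[i /and3P[a b /eqP c]]|[i [a b c]]]; exists i => //.
by rewrite a b c eqxx.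
Qed.

Lemma mb_dep (f f' : ff) j k : (forall i, (0 < nv i)%N -> pb i j -> f i = f' i) ->
  mb f j k = mb f' j k.
Proof.
move=> H; apply/mbP/mbP => -[i [a b c]]; exists i; split=> //; [by rewrite -(H i a b) | by rewrite (H i a b)].
Qed.

Lemma Cc_dep (f f' : ff) j : (forall i, (0 < nv i)%N -> pb i j -> f i = f' i) -> f j = f' j ->
  Cc j f = Cc j f' /\ Wc j f = Wc j f'.
Proof.
move=> H fj.
have iU : forall k, inU f j k = inU f' j k by move=> k; rewrite /inU (mb_dep k H).
have aF : forall k, Afree f j k = Afree f' j k by move=> k; rewrite /Afree iU.
split; first by rewrite /Cc !iU fj.
rewrite /Wc fj; case: ifP => // _.
have E1 : [set k | Afree f j k] = [set k | Afree f' j k] by apply/setP=> k; rewrite !inE aF.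
have E2 : [set k | Afree f j k && cyc_between j (f' j) k] = [set k | Afree f' j k && cyc_between j (f' j) k].
  by apply/setP=> k; rewrite !inE aF.
by rewrite E1 E2.
Qed.

Definition pre (f : ff) j := forall i, (0 < nv i)%N -> pb i j -> Cc i f.

Lemma Cc_S (f : ff) i : Cc i f -> f i \in S.
Proof. by rewrite /Cc /inU; case: ifP => [/andP[iS _] /eqP ->|_ /andP[/andP[]]]. Qed.

Lemma Cc_inj (f : ff) i1 i2 : (0 < nv i1)%N -> pb i1 i2 -> Cc i2 f -> f i1 != f i2.
Proof.
move=> p1 b12 C2; apply/eqP => e.
have m : mb f i2 (f i2) by apply/mbP; exists i1.
move: C2; rewrite /Cc /inU; case: ifP => [/andP[_ nm] /eqP fi2|_ /andP[/andP[_ nm] _]].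
  by rewrite fi2 (negPf nm) in m.
by rewrite m in nm.
Qed.

Hypothesis HTS : (#|[set i | (0 < nv i)%N]| <= #|S|)%N.

Lemma A_nonempty (f : ff) j : pre f j -> (0 < nv j)%N -> ~~ inU f j j ->
  [set k | Afree f j k] != set0.
Proof.
move=> Hpre pj nUj; apply/negP => /eqP A0.
set P := [set i | (0 < nv i)%N && pb i j].
set L := [set i | (nv i == nv j) && ~~ pb i j && (i != j)].
have injP : {in P &, injective f}.
  move=> a b; rewrite !inE => /andP[pa ba] /andP[pb' bb] e.
  apply/eqP; apply: contraT => ab; case/orP: (pb_total ab) => h.
    by move: (Cc_inj pa h (Hpre _ pb' bb)); rewrite e eqxx.
  by move: (Cc_inj pb' h (Hpre _ pa ba)); rewrite e eqxx.
have sub : S \subset f @: P :|: L.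
  apply/subsetP => k kS; rewrite inE.
  case: (boolP (mb f j k)) => [/mbP[i [pi bi <-]]|nm].
    by rewrite imset_f // inE pi bi.
  have : k \notin [set k | Afree f j k] by rewrite A0 inE.
  rewrite inE /Afree /inU kS nm /= negbK => /eqP ekj; apply/orP; right.
  rewrite inE ekj eqxx /=; apply/andP; split; last first.
    by apply/eqP => kj; move: nUj; rewrite /inU; rewrite kj in kS nm; rewrite kS nm.
  apply/negP => bkj; have pk : (0 < nv k)%N by rewrite ekj.
  move: (Hpre _ pk bkj); rewrite /Cc; case: ifP => [_ /eqP fk|].
    by move: nm; rewrite -{1}fk => /negP; apply; apply/mbP; exists k.
  rewrite /inU kS /= negbK => /mbP[i [pi bik fik]] _.
  by move: nm => /negP; apply; apply/mbP; exists i; split=> //; apply: pb_trans bik bkj.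
have c1 : (#|S| <= #|P| + #|L|)%N.
  apply: (leq_trans (subset_leq_card sub)); rewrite -(card_in_imset injP).
  exact: leq_card_setU.
have c2 : (#|P| + #|L| < #|[set i | (0 < nv i)%N]|)%N.
  have PL0 : P :&: L = set0.
    apply/setP => i; rewrite !inE; case: (pb i j); by rewrite ?andbF ?andbT.
  rewrite -cardsUI PL0 cards0 addn0 (cardsD1 j [set i | (0 < nv i)%N]) inE pj add1n ltnS.
  apply: subset_leq_card; apply/subsetP => i; rewrite !inE => /orP[/andP[pi bi]|/andP[/andP[/eqP e bi] ij]].
    by rewrite pi andbT; apply/eqP => ij; move: bi; rewrite ij (negPf (pb_irr j)).
  by rewrite ij e pj.
move: HTS c1 c2; lia.
Qed.

Lemma mb_upd (f : ff) j k k' : mb (upd f j k) j k' = mb f j k'.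
Proof.
apply: mb_dep => i _ bij; rewrite updE; case: eqP => // ij.
by move: bij; rewrite ij (negPf (pb_irr j)).
Qed.

Lemma local_sum (f : ff) j : pre f j -> (0 < nv j)%N ->
  \sum_(k | Cc j (upd f j k)) Wc j (upd f j k) = 1.
Proof.
move=> Hpre pj.
have iU : forall k k', inU (upd f j k) j k' = inU f j k' by move=> k k'; rewrite /inU mb_upd.
have aF : forall k k', Afree (upd f j k) j k' = Afree f j k' by move=> k k'; rewrite /Afree iU.
case: (boolP (inU f j j)) => Uj.
  rewrite (eq_bigl (pred1 j)) ?big_pred1_eq; last by move=> k; rewrite /Cc iU Uj updE eqxx.
  by rewrite /Wc updE eqxx eqxx.
set A := [set k | Afree f j k].
have jA : j \notin A by rewrite inE /Afree (negPf Uj).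
rewrite (eq_bigl (fun k => k \in A)); last by move=> k; rewrite /Cc !iU (negPf Uj) updE eqxx inE.
rewrite -[RHS](geom jA (A_nonempty Hpre pj Uj)).
apply: eq_bigr => k kA; have {}kA : k \in A := kA; rewrite /Wc updE eqxx.
have -> : (k == j) = false by apply/negbTE; apply/eqP => kj; rewrite -kj kA in jA.
have E1 : [set k' | Afree (upd f j k) j k'] = A by apply/setP => k'; rewrite !inE aF.
have E2 : [set k' | Afree (upd f j k) j k' && cyc_between j k k'] =
          [set k' | (k' \in A) && cyc_between j k k'] by apply/setP => k'; rewrite !inE aF.
by rewrite E1 E2.
Qed.

Hypothesis Hno1 : forall i, nv i != 1%N.

Lemma nv_ge2 i : (0 < nv i)%N -> (1 < nv i)%N.
Proof. by have := Hno1 i; case: (nv i) => [|[|]]. Qed.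

Section WithMu.
Variables (mu : seq nat) (f : ff).
Local Notation mv := (@muv n mu).
Hypothesis Hsupp : supp n mu = S.
Hypothesis Hreq : forall i, (mv i == 0%N) || (nv i <= mv i)%N.
Hypothesis Hval : tlq_valid nu mu f.

Lemma mS k : (0 < mv k)%N = (k \in S).
Proof. by rewrite -Hsupp inE. Qed.

Lemma V1 i : nv i = 0%N -> f i = i.
Proof. by move=> h; case/and5P: Hval => /forallP /(_ i) /implyP; rewrite h => /(_ isT) /eqP. Qed.
Lemma V2 i : (0 < nv i)%N -> mv (f i) = nv i.
Proof. by move=> h; case/and5P: Hval => _ /forallP /(_ i) /implyP /(_ h) /eqP. Qed.
Lemma V3 i i' : (0 < nv i)%N -> (0 < nv i')%N -> f i = f i' -> i = i'.
Proof.
move=> h h' e; case/and5P: Hval => _ _ /forallP /(_ i) /forallP /(_ i') /implyP H _ _.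
by apply/eqP; apply: H; rewrite h h' e eqxx.
Qed.
Lemma V4 k : (1 < mv k)%N -> exists i, (0 < nv i)%N /\ f i = k.
Proof.
move=> h; case/and5P: Hval => _ _ _ /forallP /(_ k) /implyP /(_ h) /existsP [i /andP[a /eqP b]] _.
by exists i.
Qed.
Lemma V5 i : (0 < nv i)%N -> mv i = nv i -> f i = i.
Proof.
move=> h e; case/and5P: Hval => _ _ _ _ /forallP /(_ i) /implyP H.
by apply/eqP; apply: H; rewrite h e eqxx.
Qed.

Lemma mv_ge k : k \in S -> (nv k <= mv k)%N.
Proof. by move=> kS; move: (Hreq k); rewrite -mS in kS; case: eqP => // e; rewrite e in kS. Qed.

Lemma mv_unmatched j k : k \in S -> ~~ mb f j k -> (nv j <= nv k)%N -> (0 < nv j)%N -> mv k = nv k.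
Proof.
move=> kS nm le pj; have ge := mv_ge kS.
case: (ltngtP (nv k) (mv k)) => // lt; last by move: ge; rewrite leqNgt lt.
have : (1 < mv k)%N by have := nv_ge2 pj; lia.
case/V4 => i [pi fik]; have e := V2 pi; rewrite fik in e.
move: nm => /negP; case; apply/mbP; exists i; split=> //; apply: pb_gt; lia.
Qed.

Lemma II_C j : (0 < nv j)%N -> Cc j f.
Proof.
move=> pj; rewrite /Cc /inU.
have nmj : ~~ mb f j (f j).
  by apply/negP => /mbP[i [pi bij e]]; move: bij; rewrite (V3 pi pj e) (negPf (pb_irr j)).
case: ifP => [/andP[jS nm]|nU].
  by rewrite (V5 pj (mv_unmatched jS nm (leqnn _) pj)).
have fjS : f j \in S by rewrite -mS (V2 pj).
rewrite fjS nmj /=; apply/eqP => e.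
have pk : (0 < nv (f j))%N by rewrite e.
have fk := V5 pk (etrans (V2 pj) (esym e)).
have fjj : f j = j by apply: V3 pk pj fk.
by rewrite fjj in fjS nmj; rewrite fjS nmj in nU.
Qed.

Lemma III_free j k : (0 < nv j)%N -> is_free nu mu f j k = Afree f j k.
Proof.
move=> pj; rewrite /is_free /Afree /inU mS.
case kS: (k \in S) => //=; case nm: (mb f j k) => //=.
case: (eqVneq (nv k) (nv j)) => [e|] /=; last by [].
by rewrite (mv_unmatched kS (negbT nm) _ pj) ?e ?eqxx // e.
Qed.

Lemma III_wt j : (0 < nv j)%N -> f j != j -> wt nu mu 1 tQ f j = Wc j f.
Proof.
move=> pj fj; rewrite /wt /Wc (negPf fj) /skipped /free_count.
have E1 : [set k | is_free nu mu f j k] = [set k | Afree f j k].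
  by apply/setP => k; rewrite !inE III_free.
have E2 : [set k | is_free nu mu f j k && cyc_between j (f j) k] =
          [set k | Afree f j k && cyc_between j (f j) k].
  by apply/setP => k; rewrite !inE III_free.
by rewrite E1 E2 !expr1n mul1r if_same mulr1.
Qed.

End WithMu.

Definition le_pb (x y : 'I_n) := (x == y) || pb x y.
Definition js := sort le_pb [seq i <- enum 'I_n | (0 < nv i)%N].

Lemma le_total : total le_pb.
Proof.
move=> x y; rewrite /le_pb; case: (eqVneq x y) => [->|xy]; rewrite ?eqxx //=.
by apply: pb_total.
Qed.

Lemma le_trans : transitive le_pb.
Proof.
move=> y x z; rewrite /le_pb => /orP[/eqP->|h] //; case/orP => [/eqP<-|h'].
  by rewrite h orbT.
by rewrite (pb_trans h h') orbT.
Qed.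

Lemma mem_js i : (i \in js) = (0 < nv i)%N.
Proof. by rewrite /js mem_sort mem_filter mem_enum andbT. Qed.

Lemma uniq_js : uniq js.
Proof. by rewrite /js sort_uniq filter_uniq // enum_uniq. Qed.

Lemma idx_js : {in js &, forall x y, pb x y -> (index x js < index y js)%N}.
Proof.
move=> x y xj yj bxy; rewrite ltnNge leq_eqVlt; apply/negP => /orP[/eqP e|lt].
  have : nth x js (index x js) = nth x js (index y js) by rewrite e.
  by rewrite !nth_index // => exy; move: bxy; rewrite exy (negPf (pb_irr y)).
have := sorted_ltn_index le_trans (sort_sorted le_total _) y x yj xj lt.
rewrite /le_pb => /orP[/eqP e|h]; first by move: bxy; rewrite e (negPf (pb_irr x)).
by move: (pb_asym bxy); rewrite h.
Qed.

Definition Good (f : ff) := [forall i, (i \notin js) ==> (f i == i)] && all (fun j => Cc j f) js.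

Lemma good_sum : \sum_(f : ff | Good f) \prod_(j <- js) Wc j f = 1.
Proof.
apply: (iter_sum (before := pb)) => //.
- exact: uniq_js.
- exact: idx_js.
- move=> j f f' jj H fj; apply: Cc_dep => // i pi bij; apply: H => //; by rewrite mem_js.
- move=> j f jj H; apply: local_sum; last by rewrite -mem_js.
  by move=> i pi bij; apply: H; rewrite ?mem_js.
Qed.

Lemma GoodP (f : ff) : Good f <-> (forall i, nv i = 0%N -> f i = i) /\ (forall j, (0 < nv j)%N -> Cc j f).
Proof.
split.
  case/andP => /forallP H /allP H'; split.
    by move=> i h; apply/eqP; move: (H i); rewrite mem_js h.
  by move=> j pj; apply: H'; rewrite mem_js.
case=> H H'; apply/andP; split.
  apply/forallP => i; rewrite mem_js lt0n negbK; apply/implyP => /eqP /H ->; by [].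
by apply/allP => j; rewrite mem_js; apply: H'.
Qed.

Definition muo (f : ff) (k : 'I_n) : nat :=
  if [pick i | (0 < nv i)%N && (f i == k)] is Some i then nv i else nat_of_bool (k \in S).
Definition mu_of (f : ff) : seq nat := [seq muo f k | k <- enum 'I_n].

Lemma size_mu_of f : size (mu_of f) = n.
Proof. by rewrite size_map size_enum_ord. Qed.

Lemma muv_mu_of f (k : 'I_n) : muv (mu_of f) k = muo f k.
Proof.
rewrite /muv /mu_of (nth_map k) ?size_enum_ord ?ltn_ord //.
by rewrite (_ : nth k (enum 'I_n) k = k) // nth_ord_enum.
Qed.

Lemma II_mu (mu : seq nat) (f : ff) : supp n mu = S ->
  tlq_valid nu mu f -> size mu = n -> mu = mu_of f.
Proof.
move=> Hs Hv Hz; apply: (@eq_from_nth _ 0%N); first by rewrite size_mu_of.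
move=> i; rewrite Hz => lt; pose k := Ordinal lt.
change (muv mu k = nth 0%N (mu_of f) k); rewrite -/(muv (mu_of f) k) muv_mu_of /muo.
case: pickP => [i' /andP[pi /eqP fik]|none].
  by rewrite -fik (V2 Hv pi).
case kS: (k \in S) => /=; last by apply/eqP; rewrite -leqn0 leqNgt (mS Hs) kS.
have := mS Hs k; rewrite kS; case: (muv mu k) (@V4 mu f Hv k) => [|[|m]] //= h _.
by case: (h isT) => i0 [pi fi]; move: (none i0); rewrite pi fi eqxx.
Qed.

Section GoodF.
Variable f : ff.
Hypothesis Hg : Good f.

Lemma G0 i : nv i = 0%N -> f i = i.
Proof. by case/GoodP: Hg => H _; apply: H. Qed.
Lemma GC j : (0 < nv j)%N -> Cc j f.
Proof. by case/GoodP: Hg => _ H; apply: H. Qed.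
Lemma GS i : (0 < nv i)%N -> f i \in S.
Proof. by move=> h; apply: Cc_S; apply: GC. Qed.
Lemma Ginj i i' : (0 < nv i)%N -> (0 < nv i')%N -> f i = f i' -> i = i'.
Proof.
move=> h h' e; apply/eqP; apply: contraT => ii'; case/orP: (pb_total ii') => b.
  by move: (Cc_inj h b (GC h')); rewrite e eqxx.
by move: (Cc_inj h' b (GC h)); rewrite e eqxx.
Qed.

Lemma muo_hit i : (0 < nv i)%N -> muo f (f i) = nv i.
Proof.
move=> h; rewrite /muo; case: pickP => [i' /andP[pi /eqP e]|none].
  by rewrite (Ginj pi h e).
by move: (none i); rewrite h eqxx.
Qed.

Lemma muo_cases k : (exists i, (0 < nv i)%N /\ f i = k) \/
   ((forall i, (0 < nv i)%N -> f i != k) /\ muo f k = nat_of_bool (k \in S)).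
Proof.
rewrite /muo; case: pickP => [i /andP[pi /eqP e]|none]; first by left; exists i.
by right; split=> // i pi; move: (none i); rewrite pi => /negbT.
Qed.

Lemma muo_pos k : (0 < muo f k)%N = (k \in S).
Proof.
case: (muo_cases k) => [[i [pi <-]]|[_ ->]]; last by case: (k \in S).
by rewrite muo_hit // pi GS.
Qed.

Lemma I_supp : supp n (mu_of f) = S.
Proof. by apply/setP => k; rewrite inE -/(muv (mu_of f) k) muv_mu_of muo_pos. Qed.

Lemma I_req i : (muo f i == 0%N) || (nv i <= muo f i)%N.
Proof.
case: (posnP (nv i)) => [->|pi]; first by rewrite orbT.
case: (posnP (muo f i)) => [->|mi]; first by [].
have iS : i \in S by rewrite -muo_pos.
move: (GC pi); rewrite /Cc /inU iS /=; case: ifP => [_ /eqP fi|].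
  by rewrite -{2}fi muo_hit // leqnn orbT.
rewrite negbK => /mbP[i' [pi' bi' fi']] _.
by rewrite -fi' muo_hit // fi'; apply: pb_le.
Qed.

Lemma I_valid : tlq_valid nu (mu_of f) f.
Proof.
apply/and5P; split.
- by apply/forallP => i; apply/implyP => /eqP /G0 ->.
- by apply/forallP => i; apply/implyP => pi; rewrite muv_mu_of muo_hit.
- apply/forallP => i; apply/forallP => i'; apply/implyP => /and3P[pi pi' /eqP e].
  by rewrite (Ginj pi pi' e).
- apply/forallP => k; apply/implyP; rewrite muv_mu_of.
  case: (muo_cases k) => [[i [pi <-]] _|[_ ->]]; last by case: (k \in S).
  by apply/existsP; exists i; rewrite pi eqxx.
- apply/forallP => i; apply/implyP; rewrite muv_mu_of => /andP[pi /eqP e].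
  apply: contraT => fi.
  have iS : i \in S by rewrite -muo_pos e.
  move: (GC pi); rewrite /Cc /inU iS /= (negPf fi); case: ifP => // /negbFE.
  move=> /mbP[i' [pi' bi' fi']] _.
  move: e; rewrite -{1}fi' muo_hit // => e.
  move: (GC pi'); rewrite /Cc fi' /inU iS /=.
  case: ifP => [_ /eqP ii'|_ /andP[_]]; last by rewrite e eqxx.
  by move: bi'; rewrite ii' (negPf (pb_irr _)).
Qed.

End GoodF.

Lemma count_nth (s : seq nat) (P : pred nat) : size s = n ->
  count P s = #|[set k : 'I_n | P (nth 0%N s k)]|.
Proof.
move=> sz; have -> : s = [seq nth 0%N s k | k : 'I_n <- enum 'I_n].
  apply: (@eq_from_nth _ 0%N); first by rewrite size_map size_enum_ord.
  move=> i; rewrite sz => lt; rewrite (nth_map (Ordinal lt)) ?size_enum_ord //.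
  by rewrite nth_enum_ord.
rewrite count_map count_card; apply: eq_card => k; rewrite !inE /=.
rewrite (nth_map k) ?size_enum_ord ?ltn_ord //.
by rewrite (_ : nth k (enum 'I_n) k = k) // nth_ord_enum.
Qed.

Lemma count0_pos (s : seq nat) : (count_mem 0%N s + count (fun x => 0 < x)%N s)%N = size s.
Proof. elim: s => //= x s IH; case: x => [|x] /=; lia. Qed.

Lemma count_pos1 (s : seq nat) : count (fun x => 0 < x)%N s = (count_mem 1%N s + count (fun x => 1 < x)%N s)%N.
Proof. elim: s => //= x s IH; case: x => [|[|x]] /=; lia. Qed.

Variable lam : seq nat.
Hypothesis Hlam : size lam = n.
Hypothesis Hnu : perm_eq nu (lambar lam).
Hypothesis HS : #|S| = count (fun x => 0 < x)%N lam.

Lemma size_nu : size nu = n.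
Proof. by rewrite (perm_size Hnu) size_map. Qed.

Lemma count_lambar (P : pred nat) : count P nu = count (fun y => P (if y == 1%N then 0%N else y)) lam.
Proof. by rewrite (permP Hnu) count_map. Qed.

Lemma card_T : #|[set i | (0 < nv i)%N]| = count (fun x => 1 < x)%N lam.
Proof.
rewrite -(count_nth _ size_nu) count_lambar; apply: eq_count => y /=.
by case: y => [|[|y]].
Qed.

Lemma I_perm (f : ff) : Good f -> perm_eq (mu_of f) lam.
Proof.
move=> Hg; rewrite /perm_eq; apply/allP => x _; apply/eqP.
rewrite /mu_of count_map count_card.
have injT : {in [set i | (0 < nv i)%N] &, injective f}.
  by move=> a b; rewrite !inE => pa pb'; apply: (Ginj Hg).
case: x => [|[|x]].
- have -> : [set k | preim (muo f) (pred1 0%N) k] = ~: S.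
    by apply/setP => k; rewrite !inE /= -[_ == 0%N]negbK -lt0n (muo_pos Hg).
  have := cardsC S; rewrite card_ord HS => h; have := count0_pos lam; rewrite Hlam => H2.
  by apply/eqP; rewrite -(eqn_add2r (count (fun x => 0 < x)%N lam)) H2 addnC h.
- have -> : [set k | preim (muo f) (pred1 1%N) k] = S :\: f @: [set i | (0 < nv i)%N].
    apply/setP => k; rewrite !inE /=.
    case: (muo_cases f k) => [[i [pi <-]]|[none ->]].
      by rewrite (muo_hit Hg) // imset_f ?inE //= (negPf (Hno1 i)).
    have -> : (k \in f @: [set i | (0 < nv i)%N]) = false.
      by apply/negbTE/imsetP => -[i]; rewrite inE => pi e; move: (none i pi); rewrite -e eqxx.
    by case: (k \in S).
  rewrite cardsD (setIidPr _); last first.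
    by apply/subsetP => k /imsetP[i]; rewrite inE => pi ->; apply: (GS Hg).
  rewrite (card_in_imset injT) card_T HS count_pos1; lia.
- have -> : [set k | preim (muo f) (pred1 x.+2) k] = f @: [set i | nv i == x.+2].
    apply/setP => k; rewrite !inE /=.
    case: (muo_cases f k) => [[i [pi <-]]|[none ->]].
      rewrite (muo_hit Hg) //; apply/idP/imsetP => [e|[i' ]]; first by exists i; rewrite ?inE.
      by rewrite inE => /eqP e' fe; rewrite (Ginj Hg pi _ fe) ?e'.
    apply/idP/imsetP => [|[i]]; first by case: (k \in S).
    by rewrite inE => /eqP e ek; move: (none i); rewrite e ek eqxx => /(_ isT).
  rewrite card_in_imset; last first.
    by move=> a b; rewrite !inE => /eqP ea /eqP eb; apply: (Ginj Hg); rewrite ?ea ?eb.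
  rewrite -(count_nth (pred1 x.+2) size_nu) count_lambar; apply: eq_count => y /=.
  by case: y => [|[|y]].
Qed.

Lemma all_no1 : all (fun x => x != 1%N) nu.
Proof.
apply/allP => x; rewrite (perm_mem Hnu) => /mapP[y _ ->].
by case: y => [|[|y]].
Qed.

Lemma filter_lambar : [seq x <- lambar lam | (1 < x)%N] = [seq x <- lam | (1 < x)%N].
Proof.
rewrite filter_map; set s := filter _ _; rewrite (_ : s = [seq x <- lam | (1 < x)%N]).
  by apply: map_id_in => y; rewrite mem_filter; case: y => [|[|y]].
by apply: eq_filter => y /=; case: y => [|[|y]].
Qed.

Lemma req_mu_of f : Good f -> tlq_require n nu (mu_of f).
Proof.
move=> Hg; apply/and5P; split.
- by rewrite size_nu.
- by rewrite size_mu_of.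
- exact: all_no1.
- apply: (perm_trans (perm_filter _ (I_perm Hg))).
  by rewrite -filter_lambar perm_sym; apply: perm_filter.
- by apply/forallP => i; rewrite muv_mu_of; apply: I_req.
Qed.

Lemma js_prod (F : 'I_n -> Qt) :
  \prod_(j <- js) F j = \prod_(j | (0 < nv j)%N) F j.
Proof.
have pjs : perm_eq js [seq i <- enum 'I_n | (0 < nv i)%N] by rewrite /js perm_sort.
by rewrite (perm_big _ pjs) big_filter big_enum_cond.
Qed.

Lemma main_sec :
  \sum_(mu <- permutations lam | supp n mu == S) acoef_q1 n nu mu = 1.
Proof.
rewrite -good_sum.
transitivity (\sum_(mu <- permutations lam | supp n mu == S)
   \sum_(f : ff | Good f) (if tlq_require n nu mu && tlq_valid nu mu f then \prod_(j <- js) Wc j f else 0)).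
  rewrite [LHS]big_seq_cond [RHS]big_seq_cond; apply: eq_bigr => mu /andP[mP /eqP Hs].
  rewrite /acoef_q1 /acoef; case: ifP => Hr; last by rewrite big1 // => f _; rewrite Hr.
  have Hreq : forall i, (muv mu i == 0%N) || (nv i <= muv mu i)%N.
    by move: Hr => /and5P[_ _ _ _ /forallP].
  rewrite [RHS]big_mkcond [LHS]big_mkcond; apply: eq_bigr => f _; rewrite inE /=.
  case: (boolP (tlq_valid nu mu f)) => Hv; last by case: (Good f).
  have Hg : Good f.
    by apply/GoodP; split; [move=> i; exact: (V1 Hv) | move=> j pj; exact: (II_C Hs Hreq Hv pj)].
  rewrite Hg js_prod (eq_bigr (fun j => Wc j f)); last first.
    by move=> j /andP[pj fj]; apply: (III_wt Hs Hreq Hv pj fj).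
  rewrite big_mkcondr /=; apply: eq_bigr => j _.
  by case: (eqVneq (f j) j) => // fj; rewrite /Wc fj eqxx.
rewrite exchange_big /=; apply: eq_bigr => f Hg.
rewrite -big_mkcondr big_const_seq.
rewrite (eq_in_count (a2 := pred1 (mu_of f))); last first.
  move=> mu; rewrite mem_permutations => pm; have sz : size mu = n by rewrite (perm_size pm).
  apply/idP/eqP => [/andP[/eqP Hs /andP[_ Hv]]|->]; first exact: II_mu Hs Hv sz.
  by rewrite I_supp // eqxx req_mu_of // I_valid.
by rewrite count_uniq_mem ?permutations_uniq // mem_permutations I_perm //= addr0.
Qed.

End Main.

Unset Implicit Arguments.
Theorem lemma7p3 (n : nat) (lam : seq nat) (nu : seq nat) (S : {set 'I_n}) :
  size lam = n ->
  sorted geq lam ->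
  perm_eq nu (lambar lam) ->
  #|S| = count (fun x => (0 < x)%N) lam ->
  \sum_(mu <- permutations lam | supp n mu == S) acoef_q1 n nu mu = 1.
Proof.
move=> Hlam _ Hnu HS.
apply: (main_sec _ _ Hlam Hnu HS).
- rewrite (card_T Hlam Hnu) HS; apply: sub_count => x /=; lia.
- move=> i; have := allP (all_no1 Hnu) (nuv nu i); apply.
  by rewrite /nuv mem_nth // (size_nu Hlam Hnu).
Qed.
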